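(* Let $\alpha,\beta\in(0,1)$ with $\alpha+\beta>1$. There is a constant $C$ (depending only on $\alpha,\beta$) such that for all sufficiently large $k$: with the medium-expectation rounding defined in the context, if $|\mathcal{M}_1^*(k)|>k^\beta$, $X_i$ ($i\in\mathcal{M}_1^*(k)$) are independent indicators with $\mathbb{E}[X_i]=p_i$ and $Y_i$ ($i\in\mathcal{M}_1^*(k)$) are independent indicators with $\mathbb{E}[Y_i]=q_i$, then $$\left\|\sum_{i\in\mathcal{M}_1^*(k)}X_i-\sum_{i\in\mathcal{M}_1^*(k)}Y_i\right\|\le C\left(k^{-\frac{\alpha+\beta-1}{2}}+k^{-\alpha}+k^{-1/2}\right).$$
   Context: $\|\cdot\|$ is total variation distance. Let $k$ be a positive integer, $\alpha\in(0,1)$, and $p_1,\dots,p_n\in[0,1]$. For $j=0,1,\dots,\lfloor k/2\rfloor$ let $I_j=[j/k,(j+1)/k)$ if $j<\lfloor k/2\rfloor$ and $I_{\lfloor k/2\rfloor}=[\lfloor k/2\rfloor/k,1/2]$; let $I^*_j=\{i:p_i\in I_j\}=\{j_1,\dots,j_{n_j}\}$ (listed in some fixed order, $n_j=|I^*_j|$), $p^j_i:=p_{j_i}$ and $\delta^j_i:=p^j_i-j/k$. Let $\mathcal{M}_1^*(k)=\bigcup_{j=\lfloor k^\alpha\rfloor}^{\lfloor k/2\rfloor}I^*_j$. Medium-expectation rounding: for $j=\lfloor k^\alpha\rfloor,\dots,\lfloor k/2\rfloor$ let $S_j=\sum_{i=1}^{n_j}\delta^j_i$, $m_j=\lfloor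 kS_j\rfloor$, and set $q_{j_i}=(j+1)/k$ for $i=1,\dots,m_j$ and $q_{j_i}=j/k$ for $i=m_j+1,\dots,n_j$. *)

(* Defs.v *)
From Stdlib Require Import Reals Lra Lia ZArith List.
Import ListNotations.
Open Scope R_scope.

Definition inI (k j : nat) (x : R) : Prop :=
  if Nat.ltb j (Nat.div k 2)
  then INR j / INR k <= x /\ x < INR (S j) / INR k
  else (j = Nat.div k 2 /\ INR j / INR k <= x /\ x <= 1/2).

Definition lowIdx (k : nat) (alpha : R) : nat :=
  Z.to_nat (Int_part (Rpower (INR k) alpha)).

Definition bucket_range (k : nat) (alpha : R) : list nat :=
  seq (lowIdx k alpha) (S (Nat.div k 2) - lowIdx k alpha).

Definition sumR (l : list R) : R := fold_right Rplus 0 l.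

Definition S_bucket (k j : nat) (p : nat -> R) (l : list nat) : R :=
  sumR (map (fun i => p i - INR j / INR k) l).

Definition m_bucket (k j : nat) (p : nat -> R) (l : list nat) : Z :=
  Int_part (INR k * S_bucket k j p l).

(* Law of a sum of independent indicators with means ps (Poisson binomial):
   pb ps m = P(sum = m). *)
Fixpoint pb (ps : list R) (m : nat) : R :=
  match ps with
  | [] => match m with O => 1 | S _ => 0 end
  | p :: ps' =>
      match m with
      | O => (1 - p) * pb ps' O
      | S m' => p * pb ps' m' + (1 - p) * pb ps' m
      end
  end.

Definition tv_pb (ps qs : list R) : R :=
  / 2 * sum_f_R0 (fun m => Rabs (pb ps m - pb qs m)) (Nat.max (length ps) (length qs)).

(* Main.v *)
Require Import Defs.
From Stdlib Require Import Reals ZArith List.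
From Stdlib Require Import Lra Lia Psatz Permutation FunctionalExtensionality.
Import ListNotations.
Open Scope R_scope.

Definition shiftf (f : nat -> R) (m : nat) : R :=
  match m with O => 0 | S m' => f m' end.
Definition Bop (r : R) (f : nat -> R) (m : nat) : R := r * shiftf f m + (1 - r) * f m.
Definition Dop (f : nat -> R) (m : nat) : R := shiftf f m - f m.
Definition norm (L : nat) (f : nat -> R) : R := sum_f_R0 (fun m => Rabs (f m)) L.

Lemma pb_cons r l : pb (r :: l) = Bop r (pb l).
Proof. apply functional_extensionality; intros [|m]; unfold Bop; simpl; ring. Qed.

Lemma Bop_comm r s f : Bop r (Bop s f) = Bop s (Bop r f).
Proof.
  apply functional_extensionality; intros [|m]; unfold Bop; simpl; [ring|].
  destruct m; simpl; ring.
Qed.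

Lemma Dop_Bop r f : Dop (Bop r f) = Bop r (Dop f).
Proof.
  apply functional_extensionality; intros [|m]; unfold Bop, Dop; simpl; [ring|].
  destruct m; simpl; ring.
Qed.

Lemma pb_perm l1 l2 : Permutation l1 l2 -> pb l1 = pb l2.
Proof.
  induction 1; auto.
  - rewrite !pb_cons, IHPermutation; auto.
  - rewrite !pb_cons; apply Bop_comm.
  - congruence.
Qed.

Lemma norm_nonneg L f : 0 <= norm L f.
Proof.
  unfold norm; induction L; simpl; [apply Rabs_pos|].
  pose proof (Rabs_pos (f (S L))); lra.
Qed.

Lemma norm_ext L f g : (forall m, f m = g m) -> norm L f = norm L g.
Proof. intros H; unfold norm; apply sum_eq; intros; rewrite H; auto. Qed.

Lemma norm_le L f g : (forall m, Rabs (f m) <= Rabs (g m)) -> norm L f <= norm L g.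
Proof. intros H; unfold norm; apply sum_Rle; intros; auto. Qed.

Lemma norm_triangle L f g : norm L (fun m => f m + g m) <= norm L f + norm L g.
Proof.
  unfold norm; rewrite <- sum_plus; apply sum_Rle; intros; apply Rabs_triang.
Qed.

Lemma norm_scal L c f : norm L (fun m => c * f m) = Rabs c * norm L f.
Proof.
  unfold norm.
  rewrite (scal_sum (fun m => Rabs (f m)) L (Rabs c)); apply sum_eq; intros.
  rewrite Rabs_mult; ring.
Qed.

Lemma norm_S L f : norm (S L) f = norm L f + Rabs (f (S L)).
Proof. reflexivity. Qed.

Lemma norm_shift_eq L f : norm (S L) (shiftf f) = norm L f.
Proof.
  induction L.
  - unfold norm; simpl. rewrite Rabs_R0; ring.
  - rewrite norm_S, IHL. simpl. reflexivity.
Qed.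

Lemma norm_shift L f : norm L (shiftf f) <= norm L f.
Proof.
  destruct L.
  - unfold norm; simpl; rewrite Rabs_R0; apply Rabs_pos.
  - rewrite norm_shift_eq, norm_S. pose proof (Rabs_pos (f (S L))); lra.
Qed.

Lemma norm_Bop L r f : 0 <= r <= 1 -> norm L (Bop r f) <= norm L f.
Proof.
  intros Hr. unfold Bop.
  eapply Rle_trans; [apply norm_triangle|].
  rewrite (norm_scal L r (shiftf f)), (norm_scal L (1 - r) f).
  rewrite (Rabs_pos_eq r), (Rabs_pos_eq (1-r)) by lra.
  pose proof (norm_shift L f). nra.
Qed.

Definition in01 (r : R) : Prop := 0 <= r <= 1.

Lemma pb_zero l m : (length l < m)%nat -> pb l m = 0.
Proof.
  revert m; induction l as [|r l IH]; intros m Hm; simpl in *.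
  - destruct m; [lia|auto].
  - destruct m; [lia|]. rewrite !IH by lia. ring.
Qed.

Lemma pb_nonneg l : Forall in01 l -> forall m, 0 <= pb l m.
Proof.
  induction 1 as [|r l Hr Hl IH]; intros m; simpl.
  - destruct m; lra.
  - unfold in01 in Hr. destruct m.
    + pose proof (IH O); nra.
    + pose proof (IH m); pose proof (IH (S m)); nra.
Qed.

Definition Ex (l : list R) (t : nat -> R) : R :=
  sum_f_R0 (fun s => pb l s * t s) (length l).

Lemma sum_shift f n : sum_f_R0 f (S n) = f O + sum_f_R0 (fun s => f (S s)) n.
Proof.
  induction n.
  - simpl; ring.
  - rewrite tech5, IHn. simpl. ring.
Qed.

Lemma sum_scal_l c f N : sum_f_R0 (fun s => c * f s) N = c * sum_f_R0 f N.
Proof. rewrite scal_sum; apply sum_eq; intros; ring. Qed.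

Lemma Ex_cons r l t :
  Ex (r :: l) t = r * Ex l (fun s => t (S s)) + (1 - r) * Ex l t.
Proof.
  unfold Ex. simpl length. rewrite pb_cons.
  transitivity (sum_f_R0 (fun s => r * (shiftf (pb l) s * t s) + (1 - r) * (pb l s * t s)) (S (length l))).
  { apply sum_eq; intros; unfold Bop; ring. }
  rewrite sum_plus.
  rewrite (sum_scal_l r (fun s => shiftf (pb l) s * t s)).
  rewrite (sum_scal_l (1 - r) (fun s => pb l s * t s)).
  rewrite sum_shift. simpl shiftf.
  rewrite tech5. rewrite (pb_zero l (S (length l))) by lia.
  ring.
Qed.

Lemma Ex_ext l t1 t2 : (forall s, (s <= length l)%nat -> t1 s = t2 s) -> Ex l t1 = Ex l t2.
Proof. intros H; unfold Ex; apply sum_eq; intros; rewrite H; auto. Qed.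

Lemma Ex_plus l t1 t2 : Ex l (fun s => t1 s + t2 s) = Ex l t1 + Ex l t2.
Proof.
  unfold Ex; rewrite <- sum_plus; apply sum_eq; intros; ring.
Qed.

Lemma Ex_scal l c t : Ex l (fun s => c * t s) = c * Ex l t.
Proof.
  unfold Ex; rewrite <- sum_scal_l; apply sum_eq; intros; ring.
Qed.

Lemma Ex_mono l t1 t2 : Forall in01 l ->
  (forall s, (s <= length l)%nat -> t1 s <= t2 s) -> Ex l t1 <= Ex l t2.
Proof.
  intros Hl H; unfold Ex; apply sum_Rle; intros.
  pose proof (pb_nonneg l Hl n). pose proof (H n H0). nra.
Qed.

Lemma Ex_one l : Ex l (fun _ => 1) = 1.
Proof.
  induction l as [|r l IH].
  - unfold Ex; simpl; ring.
  - rewrite Ex_cons, IH. ring.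
Qed.

Lemma Ex_const l c : Ex l (fun _ => c) = c.
Proof.
  rewrite (Ex_ext l (fun _ => c) (fun _ => c * 1)) by (intros; ring).
  rewrite Ex_scal, Ex_one; ring.
Qed.

Lemma Ex_mean l : Ex l INR = sumR l.
Proof.
  induction l as [|r l IH].
  - unfold Ex; simpl; ring.
  - rewrite Ex_cons.
    rewrite (Ex_ext l (fun s => INR (S s)) (fun s => INR s + 1)) by (intros; rewrite S_INR; ring).
    rewrite Ex_plus, Ex_one, IH. simpl. ring.
Qed.

Lemma Ex_sq l : Ex l (fun s => INR s * INR s) =
  sumR (map (fun r => r * (1 - r)) l) + sumR l * sumR l.
Proof.
  induction l as [|r l IH].
  - unfold Ex; simpl; ring.
  - rewrite Ex_cons.
    rewrite (Ex_ext l (fun s => INR (S s) * INR (S s))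
      (fun s => INR s * INR s + (2 * INR s + 1))) by (intros; rewrite S_INR; ring).
    rewrite Ex_plus, IH.
    rewrite (Ex_ext l (fun s => 2 * INR s + 1) (fun s => 2 * INR s + 1 * 1)) by (intros; ring).
    rewrite Ex_plus, Ex_scal, Ex_scal, Ex_one, Ex_mean. simpl. ring.
Qed.

Lemma abs_le_amgm x c : 0 < c -> Rabs x <= (x * x / c + c) / 2.
Proof.
  intros Hc.
  assert (Hy : Rabs x * Rabs x = x * x).
  { rewrite <- Rabs_mult. apply Rabs_pos_eq. nra. }
  pose proof (Rabs_pos x).
  assert (Hi : c * / c = 1) by (field; lra).
  assert (Hp : 0 < / c) by (apply Rinv_0_lt_compat; lra).
  assert (H2 : 0 <= (Rabs x - c) * (Rabs x - c) * / c) by (apply Rmult_le_pos; [apply Rle_0_sqr | lra]).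
  unfold Rdiv. rewrite <- Hy. nra.
Qed.

Lemma Ex_jensen l g : Forall in01 l -> 0 < Ex l (fun s => g s * g s) ->
  Ex l (fun s => Rabs (g s)) <= sqrt (Ex l (fun s => g s * g s)).
Proof.
  intros Hl HV. set (V := Ex l (fun s => g s * g s)) in *.
  set (c := sqrt V).
  assert (Hc : 0 < c) by (apply sqrt_lt_R0; auto).
  eapply Rle_trans.
  { apply (Ex_mono l _ (fun s => (/ c / 2) * (g s * g s) + (c / 2) * 1)); auto.
    intros s _. pose proof (abs_le_amgm (g s) c Hc). unfold Rdiv in *. nra. }
  rewrite Ex_plus, Ex_scal, Ex_scal, Ex_one. fold V.
  assert (Hcc : c * c = V) by (apply sqrt_sqrt; lra).
  rewrite <- Hcc. field_simplify; [|lra]. lra.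
Qed.

Lemma binom_I1 (p : R) (n s : nat) :
  INR (S s) * pb (repeat p (S n)) (S s) = INR (S n) * p * pb (repeat p n) s.
Proof.
  revert s; induction n as [|n IH]; intros s.
  - simpl. destruct s; simpl; ring.
  - change (repeat p (S (S n))) with (p :: repeat p (S n)).
    change (repeat p (S n)) with (p :: repeat p n) at 2.
    destruct s as [|s].
    + pose proof (IH O) as H0.
      change (pb (p :: repeat p (S n)) 1%nat) with
        (p * pb (repeat p (S n)) O + (1 - p) * pb (repeat p (S n)) 1%nat).
      change (pb (p :: repeat p n) O) with ((1 - p) * pb (repeat p n) O).
      change (repeat p (S n)) with (p :: repeat p n) in *.
      change (pb (p :: repeat p n) O) with ((1 - p) * pb (repeat p n) O) in *.
      rewrite !S_INR in *. simpl INR in *. nra.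
    + pose proof (IH (S s)) as H1. pose proof (IH s) as H2.
      change (pb (p :: repeat p (S n)) (S (S s))) with
        (p * pb (repeat p (S n)) (S s) + (1 - p) * pb (repeat p (S n)) (S (S s))).
      change (pb (p :: repeat p n) (S s)) with
        (p * pb (repeat p n) s + (1 - p) * pb (repeat p n) (S s)).
      set (A := pb (repeat p (S n)) (S s)) in *.
      set (B := pb (repeat p (S n)) (S (S s))) in *.
      set (X := pb (repeat p n) s) in *.
      set (Y := pb (repeat p n) (S s)) in *.
      assert (HA : A = p * X + (1 - p) * Y) by (unfold A, X, Y; reflexivity).
      rewrite !S_INR in *.
      replace ((INR s + 1 + 1) * (p * A + (1 - p) * B)) with
        (p * ((INR s + 1) * A) + p * A + (1 - p) * ((INR s + 1 + 1) * B)) by ring.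
      rewrite H1, H2. rewrite HA. ring.
Qed.

Lemma binom_shift (p : R) (n m : nat) :
  INR m * pb (repeat p (S n)) m = INR (S n) * p * shiftf (pb (repeat p n)) m.
Proof.
  destruct m as [|m]; simpl shiftf.
  - simpl INR. ring.
  - apply binom_I1.
Qed.

Lemma in01_repeat x n : in01 x -> Forall in01 (repeat x n).
Proof. intros H; apply Forall_forall; intros y Hy; apply repeat_spec in Hy; subst; auto. Qed.

Lemma sumR_repeat x n : sumR (repeat x n) = INR n * x.
Proof. induction n; simpl repeat; [simpl; ring|]. unfold sumR in *; simpl fold_right. rewrite IHn, S_INR; ring. Qed.

Lemma sum_mono_nonneg f L1 L2 : (forall m, 0 <= f m) -> (L1 <= L2)%nat ->
  sum_f_R0 f L1 <= sum_f_R0 f L2.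
Proof.
  intros Hf HL; induction HL; [lra|]. rewrite tech5. pose proof (Hf (S m)); lra.
Qed.

Lemma sum_range f L K : (forall m, 0 <= f m) -> (forall m, (K < m)%nat -> f m = 0) ->
  sum_f_R0 f L <= sum_f_R0 f K.
Proof.
  intros Hf Hz. induction L.
  - apply (sum_mono_nonneg f 0 K); auto; lia.
  - destruct (le_lt_dec (S L) K).
    + apply sum_mono_nonneg; auto.
    + rewrite tech5, (Hz (S L)) by lia. lra.
Qed.

Lemma norm_le_sum L f g : (forall m, Rabs (f m) <= g m) -> norm L f <= sum_f_R0 g L.
Proof. intros H; unfold norm; apply sum_Rle; intros; auto. Qed.

Lemma norm_pb_le1 L l : Forall in01 l -> norm L (pb l) <= 1.
Proof.
  intros Hl.
  rewrite <- (Ex_one l). unfold Ex, norm.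
  eapply Rle_trans.
  - apply (sum_range (fun m => Rabs (pb l m)) L (length l)).
    + intros; apply Rabs_pos.
    + intros m Hm; rewrite pb_zero by auto; apply Rabs_R0.
  - right; apply sum_eq; intros. rewrite Rabs_pos_eq by (apply pb_nonneg; auto). ring.
Qed.

Lemma Ex_inv p n : 0 < p <= 1 ->
  Ex (repeat p n) (fun s => / (INR s + 1)) <= / (INR (S n) * p).
Proof.
  intros Hp. unfold Ex. rewrite repeat_length.
  assert (Hn : 0 < INR (S n)) by (apply lt_0_INR; lia).
  transitivity (sum_f_R0 (fun s => / (INR (S n) * p) * pb (repeat p (S n)) (S s)) n).
  - right. apply sum_eq; intros s _.
    pose proof (binom_I1 p n s) as H. rewrite S_INR in H.
    assert (0 < INR s + 1) by (pose proof (pos_INR s); lra).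
    assert (HA : pb (repeat p n) s = (INR s + 1) * pb (repeat p (S n)) (S s) / (INR (S n) * p)).
    { rewrite H. field. nra. }
    rewrite HA. field. nra.
  - rewrite sum_scal_l.
    assert (Hs : sum_f_R0 (fun s => pb (repeat p (S n)) (S s)) n <= 1).
    { pose proof (Ex_one (repeat p (S n))) as E. unfold Ex in E. rewrite repeat_length in E.
      rewrite sum_shift in E.
      assert (0 <= pb (repeat p (S n)) 0) by (apply pb_nonneg, in01_repeat; unfold in01; lra).
      rewrite (sum_eq (fun s => pb (repeat p (S n)) (S s) * 1) (fun s => pb (repeat p (S n)) (S s))) in E by (intros; ring).
      lra. }
    assert (0 < / (INR (S n) * p)) by (apply Rinv_0_lt_compat; nra).
    nra.
Qed.

Lemma Ex_g2 N : Ex (repeat (/2) N) (fun s => (2 * INR s - INR N) * (2 * INR s - INR N)) = INR N.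
Proof.
  rewrite (Ex_ext _ _ (fun s => 4 * (INR s * INR s) + (- 4 * INR N * INR s + (INR N * INR N) * 1)))
    by (intros; ring).
  rewrite !Ex_plus, !Ex_scal, Ex_one, Ex_sq, Ex_mean, map_repeat, !sumR_repeat. field.
Qed.

Lemma Db_formula n m :
  Dop (pb (repeat (/2) n)) m = 2 * (2 * INR m - INR (S n)) / INR (S n) * pb (repeat (/2) (S n)) m.
Proof.
  pose proof (binom_shift (/2) n m) as H.
  assert (Hw : pb (repeat (/2) (S n)) m = /2 * shiftf (pb (repeat (/2) n)) m + (1 - /2) * pb (repeat (/2) n) m).
  { change (repeat (/2) (S n)) with (/2 :: repeat (/2) n). rewrite pb_cons. reflexivity. }
  unfold Dop.
  assert (Hn : 0 < INR (S n)) by (apply lt_0_INR; lia).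
  set (u := shiftf (pb (repeat (/2) n)) m) in *.
  set (v := pb (repeat (/2) n) m) in *.
  set (w := pb (repeat (/2) (S n)) m) in *.
  assert (Hu : u = 2 * INR m * w / INR (S n)).
  { apply (Rmult_eq_reg_l (INR (S n))); [|lra]. field_simplify; [|lra]. lra. }
  assert (Hv : v = 2 * w - u) by lra.
  rewrite Hv, Hu. field. lra.
Qed.

Lemma T1 n L : norm L (Dop (pb (repeat (/2) n))) <= 2 / sqrt (INR n + 1).
Proof.
  set (w := pb (repeat (/2) (S n))).
  assert (Hin : Forall in01 (repeat (/2) (S n))) by (apply in01_repeat; unfold in01; lra).
  assert (Hn : 0 < INR (S n)) by (apply lt_0_INR; lia).
  set (c := 2 / INR (S n)).
  assert (Hc : 0 < c) by (unfold c; apply Rdiv_lt_0_compat; lra).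
  eapply Rle_trans.
  { apply (norm_le_sum L _ (fun m => c * (w m * Rabs (2 * INR m - INR (S n))))).
    intros m. rewrite Db_formula. fold w.
    replace (2 * (2 * INR m - INR (S n)) / INR (S n) * w m) with (c * ((2 * INR m - INR (S n)) * w m))
      by (unfold c; field; lra).
    rewrite Rabs_mult, Rabs_mult, (Rabs_pos_eq c) by lra.
    rewrite (Rabs_pos_eq (w m)) by (apply pb_nonneg; auto). right; ring. }
  eapply Rle_trans.
  { apply (sum_range _ L (S n)).
    - intros m. apply Rmult_le_pos; [lra|]. apply Rmult_le_pos; [apply pb_nonneg; auto|apply Rabs_pos].
    - intros m Hm. unfold w. rewrite pb_zero by (rewrite repeat_length; lia). ring. }
  rewrite sum_scal_l.
  assert (HE : sum_f_R0 (fun m => w m * Rabs (2 * INR m - INR (S n))) (S n) <= sqrt (INR (S n))).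
  { pose proof (Ex_jensen (repeat (/2) (S n)) (fun s => 2 * INR s - INR (S n)) Hin) as J.
    rewrite Ex_g2 in J. specialize (J Hn). unfold Ex in J. rewrite repeat_length in J. exact J. }
  assert (Hs : 0 < sqrt (INR (S n))) by (apply sqrt_lt_R0; lra).
  rewrite S_INR in *.
  apply Rle_trans with (c * sqrt (INR n + 1)); [apply Rmult_le_compat_l; lra|].
  right. unfold c. rewrite S_INR.
  pose proof (sqrt_sqrt (INR n + 1)) as Hq. field_simplify; [|lra|lra].
  rewrite <- Hq at 2 by lra. field. lra.
Qed.

Lemma T2 n L : norm L (Dop (Dop (pb (repeat (/2) n)))) <= 12 / (INR n + 1).
Proof.
  set (w1 := pb (repeat (/2) (S n))).
  set (w2 := pb (repeat (/2) (S (S n)))).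
  assert (Hin1 : Forall in01 (repeat (/2) (S n))) by (apply in01_repeat; unfold in01; lra).
  assert (Hin2 : Forall in01 (repeat (/2) (S (S n)))) by (apply in01_repeat; unfold in01; lra).
  assert (Hn : 0 < INR n + 1) by (pose proof (pos_INR n); lra).
  set (c := 2 / (INR n + 1)).
  assert (Hc : 0 < c) by (unfold c; apply Rdiv_lt_0_compat; lra).
  set (g := fun m => 2 * INR m - (INR n + 2)).
  assert (Hpt : forall m, Rabs (Dop (Dop (pb (repeat (/2) n))) m) <=
     (c * (2 / (INR n + 2))) * (w2 m * (g m * g m + Rabs (g m))) + (2 * c) * Rabs (shiftf w1 m)).
  { intros m.
    assert (HD : forall m', Dop (pb (repeat (/2) n)) m' = c * (2 * INR m' - (INR n + 1)) * w1 m').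
    { intros m'. rewrite Db_formula. unfold c, w1. rewrite S_INR. field. lra. }
    assert (HS : shiftf (Dop (pb (repeat (/2) n))) m = c * (2 * INR m - (INR n + 3)) * shiftf w1 m).
    { destruct m; simpl shiftf; [ring|]. rewrite HD, S_INR. ring. }
    assert (HD1 : shiftf w1 m - w1 m = 2 / (INR n + 2) * g m * w2 m).
    { pose proof (Db_formula (S n) m) as E. unfold Dop in E. fold w1 w2 in E. rewrite E.
      unfold g. rewrite !S_INR. field. lra. }
    unfold Dop at 1. rewrite HS. rewrite (HD m).
    replace (c * (2 * INR m - (INR n + 3)) * shiftf w1 m - c * (2 * INR m - (INR n + 1)) * w1 m)
      with (c * ((g m + 1) * (shiftf w1 m - w1 m)) + (- (2 * c)) * shiftf w1 m)
      by (unfold g; ring).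
    rewrite HD1.
    eapply Rle_trans; [apply Rabs_triang|].
    rewrite !Rabs_mult, Rabs_Ropp, (Rabs_pos_eq c), (Rabs_pos_eq (2 * c)) by lra.
    assert (Hw2 : 0 <= w2 m) by (apply pb_nonneg; auto).
    rewrite (Rabs_pos_eq (w2 m)) by lra.
    rewrite (Rabs_pos_eq (2 / (INR n + 2))) by (apply Rlt_le, Rdiv_lt_0_compat; lra).
    assert (Hgg : Rabs (g m + 1) * Rabs (g m) <= g m * g m + Rabs (g m)).
    { rewrite <- Rabs_mult. replace ((g m + 1) * g m) with (g m * g m + g m) by ring.
      eapply Rle_trans; [apply Rabs_triang|]. rewrite Rabs_pos_eq by nra. lra. }
    assert (0 <= 2 / (INR n + 2)) by (apply Rlt_le, Rdiv_lt_0_compat; lra).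
    assert (0 <= Rabs (shiftf w1 m)) by apply Rabs_pos.
    assert (0 <= c * (2 / (INR n + 2))) by nra.
    pose proof (Rabs_pos (g m + 1)). pose proof (Rabs_pos (g m)).
    assert (c * (Rabs (g m + 1) * (2 / (INR n + 2) * Rabs (g m) * w2 m)) =
            (c * (2 / (INR n + 2))) * (w2 m * (Rabs (g m + 1) * Rabs (g m)))) by ring.
    rewrite H4. apply Rplus_le_compat_r. apply Rmult_le_compat_l; auto.
    apply Rmult_le_compat_l; auto. }
  eapply Rle_trans; [apply (norm_le_sum L _ _ Hpt)|].
  rewrite sum_plus, !sum_scal_l.
  assert (HA : sum_f_R0 (fun m => w2 m * (g m * g m + Rabs (g m))) L <= 2 * (INR n + 2)).
  { eapply Rle_trans.
    { apply (sum_range _ L (S (S n))).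
      - intros m. apply Rmult_le_pos; [apply pb_nonneg; auto|]. pose proof (Rabs_pos (g m)). nra.
      - intros m Hm. unfold w2. rewrite pb_zero by (rewrite repeat_length; lia). ring. }
    pose proof (Ex_g2 (S (S n))) as E2.
    assert (HN : 0 < INR (S (S n))) by (apply lt_0_INR; lia).
    pose proof (Ex_jensen (repeat (/2) (S (S n))) (fun s => 2 * INR s - INR (S (S n))) Hin2) as J.
    cbv beta in J. rewrite E2 in J. specialize (J HN).
    pose proof (Ex_plus (repeat (/2) (S (S n))) (fun s => (2 * INR s - INR (S (S n))) * (2 * INR s - INR (S (S n))))
       (fun s => Rabs (2 * INR s - INR (S (S n))))) as EP.
    cbv beta in EP. rewrite E2 in EP. unfold Ex in EP. rewrite repeat_length in EP.
    assert (Hgdef : forall m, g m = 2 * INR m - INR (S (S n))) by (intros; unfold g; rewrite !S_INR; ring).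
    rewrite (sum_eq _ (fun s => pb (repeat (/2) (S (S n))) s * ((2 * INR s - INR (S (S n))) * (2 * INR s - INR (S (S n))) + Rabs (2 * INR s - INR (S (S n))))))
      by (intros; unfold w2; rewrite Hgdef; reflexivity).
    rewrite EP. unfold Ex in J. rewrite repeat_length in J.
    assert (Hsq : sqrt (INR (S (S n))) <= INR (S (S n))).
    { pose proof (sqrt_sqrt (INR (S (S n)))) as Q. pose proof (sqrt_pos (INR (S (S n)))).
      assert (1 <= INR (S (S n))) by (rewrite !S_INR; pose proof (pos_INR n); lra). nra. }
    rewrite !S_INR in *. lra. }
  assert (HB : sum_f_R0 (fun m => Rabs (shiftf w1 m)) L <= 1).
  { change (sum_f_R0 (fun m => Rabs (shiftf w1 m)) L) with (norm L (shiftf w1)).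
    eapply Rle_trans; [apply norm_shift|]. apply norm_pb_le1; auto. }
  assert (Hc2 : 0 <= c * (2 / (INR n + 2))) by (apply Rmult_le_pos; [lra|apply Rlt_le, Rdiv_lt_0_compat; lra]).
  apply Rle_trans with (c * (2 / (INR n + 2)) * (2 * (INR n + 2)) + 2 * c * 1).
  { apply Rplus_le_compat; apply Rmult_le_compat_l; lra. }
  right. unfold c. field. lra.
Qed.

Fixpoint Dk (k : nat) (f : nat -> R) : nat -> R :=
  match k with O => f | S k' => Dop (Dk k' f) end.

Lemma Dk_Bop k r f : Dk k (Bop r f) = Bop r (Dk k f).
Proof. induction k; simpl; auto. rewrite IHk, Dop_Bop; auto. Qed.

Lemma Dk_lin k c1 c2 f g :
  Dk k (fun m => c1 * f m + c2 * g m) = (fun m => c1 * Dk k f m + c2 * Dk k g m).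
Proof.
  induction k; simpl; auto. rewrite IHk.
  apply functional_extensionality; intros [|m]; unfold Dop; simpl; ring.
Qed.

Definition good (a r : R) : Prop := a <= r <= 1 - a.

Lemma mixture a k : 0 < a -> a < /2 -> forall rs, Forall (good a) rs -> forall hs L,
  norm L (Dk k (pb (rs ++ hs))) <=
  Ex (repeat (2 * a) (length rs)) (fun s => norm L (Dk k (pb (repeat (/2) s ++ hs)))).
Proof.
  intros Ha Ha2 rs Hrs. induction Hrs as [|r rs Hr Hrs IH]; intros hs L.
  - unfold Ex; simpl. lra.
  - simpl app. rewrite pb_cons.
    set (F := pb (rs ++ hs)).
    set (r' := (r - a) / (1 - 2 * a)).
    assert (Hr' : 0 <= r' <= 1).
    { unfold r', good in *. split; [unfold Rdiv; apply Rmult_le_pos; [lra|apply Rlt_le, Rinv_0_lt_compat; lra]|].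
      apply (Rmult_le_reg_r (1 - 2 * a)); [lra|]. field_simplify; lra. }
    assert (HB : Bop r F = (fun m => (2 * a) * Bop (/2) F m + (1 - 2 * a) * Bop r' F m)).
    { apply functional_extensionality; intros m. unfold Bop, r'. field. lra. }
    assert (H2 : Bop (/2) F = pb (rs ++ /2 :: hs)).
    { unfold F. rewrite <- pb_cons. apply pb_perm. apply Permutation_middle. }
    rewrite HB, H2, Dk_lin.
    eapply Rle_trans; [apply norm_triangle|].
    rewrite (norm_scal L (2 * a)), (norm_scal L (1 - 2 * a)).
    rewrite (Rabs_pos_eq (2 * a)), (Rabs_pos_eq (1 - 2 * a)) by lra.
    rewrite Dk_Bop.
    assert (H1 : norm L (Bop r' (Dk k F)) <= norm L (Dk k F)) by (apply norm_Bop; auto).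
    simpl length. change (repeat (2 * a) (S (length rs))) with (2 * a :: repeat (2 * a) (length rs)).
    rewrite Ex_cons.
    rewrite (Ex_ext _ (fun s => norm L (Dk k (pb (repeat (/2) (S s) ++ hs))))
                      (fun s => norm L (Dk k (pb (repeat (/2) s ++ /2 :: hs))))).
    2: { intros s _. simpl repeat. simpl app. f_equal. f_equal. apply pb_perm. apply Permutation_middle. }
    pose proof (IH (/2 :: hs) L). pose proof (IH hs L). unfold F in *. nra.
Qed.

Lemma Ex_pos_inv p n : 0 < p <= 1 -> 0 < Ex (repeat p n) (fun s => / (INR s + 1)).
Proof.
  intros Hp.
  assert (Hn : 0 < INR n + 1) by (pose proof (pos_INR n); lra).
  apply Rlt_le_trans with (Ex (repeat p n) (fun _ => / (INR n + 1))).
  - rewrite Ex_const. apply Rinv_0_lt_compat; lra.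
  - apply Ex_mono. apply in01_repeat; unfold in01; lra.
    intros s Hs. rewrite repeat_length in Hs. apply Rinv_le_contravar.
    + pose proof (pos_INR s); lra.
    + apply le_INR in Hs. lra.
Qed.

Lemma D1_bound a zs L : 0 < a -> a < /2 -> Forall (good a) zs ->
  norm L (Dop (pb zs)) <= 2 * sqrt (/ (INR (S (length zs)) * (2 * a))).
Proof.
  intros Ha Ha2 Hz.
  pose proof (mixture a 1 Ha Ha2 zs Hz [] L) as M. rewrite app_nil_r in M. simpl Dk in M.
  set (n := length zs) in *.
  assert (Hin : Forall in01 (repeat (2 * a) n)) by (apply in01_repeat; unfold in01; lra).
  eapply Rle_trans; [apply M|].
  set (g := fun s : nat => / sqrt (INR s + 1)).
  eapply Rle_trans.
  { apply (Ex_mono _ _ (fun s => 2 * Rabs (g s))); auto.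
    intros s _. rewrite app_nil_r. eapply Rle_trans; [apply T1|].
    unfold g. rewrite Rabs_pos_eq.
    - right; unfold Rdiv; ring.
    - apply Rlt_le, Rinv_0_lt_compat, sqrt_lt_R0. pose proof (pos_INR s); lra. }
  rewrite Ex_scal. apply Rmult_le_compat_l; [lra|].
  assert (Hgg : Ex (repeat (2 * a) n) (fun s => g s * g s) = Ex (repeat (2 * a) n) (fun s => / (INR s + 1))).
  { apply Ex_ext. intros s _. unfold g. rewrite <- Rinv_mult. rewrite sqrt_sqrt; auto.
    pose proof (pos_INR s); lra. }
  eapply Rle_trans; [apply Ex_jensen; auto|].
  - rewrite Hgg. apply Ex_pos_inv. lra.
  - rewrite Hgg. apply sqrt_le_1_alt. apply Ex_inv. lra.
Qed.

Lemma D2_bound a zs L : 0 < a -> a < /2 -> Forall (good a) zs ->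
  norm L (Dop (Dop (pb zs))) <= 12 * / (INR (S (length zs)) * (2 * a)).
Proof.
  intros Ha Ha2 Hz.
  pose proof (mixture a 2 Ha Ha2 zs Hz [] L) as M. rewrite app_nil_r in M. simpl Dk in M.
  set (n := length zs) in *.
  assert (Hin : Forall in01 (repeat (2 * a) n)) by (apply in01_repeat; unfold in01; lra).
  eapply Rle_trans; [apply M|].
  eapply Rle_trans.
  { apply (Ex_mono _ _ (fun s => 12 * / (INR s + 1))); auto.
    intros s _. rewrite app_nil_r. eapply Rle_trans; [apply T2|]. right; unfold Rdiv; ring. }
  rewrite Ex_scal. apply Rmult_le_compat_l; [lra|]. apply Ex_inv. lra.
Qed.

Lemma Bop_diff x y G m : Bop x G m - Bop y G m = (x - y) * Dop G m.
Proof. unfold Bop, Dop; ring. Qed.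

Definition sumd (ps : list (R * R)) : R := sumR (map (fun xy => fst xy - snd xy) ps).

Fixpoint suffix_ok (h : R) (ps : list (R * R)) : Prop :=
  match ps with
  | [] => True
  | _ :: ps' => Rabs (sumd ps) <= h /\ suffix_ok h ps'
  end.

Definition pairok (a c h : R) (xy : R * R) : Prop :=
  c <= fst xy <= c + h /\ c <= snd xy <= c + h /\ good a (fst xy) /\ good a (snd xy).

Lemma pb_front z P Rl : pb (P ++ z :: Rl) = pb (z :: P ++ Rl).
Proof. apply pb_perm. symmetry. apply Permutation_middle. Qed.

Section Bucket.
Variables (a h b1 b2 : R) (ell : nat).
Hypothesis Hb2 : 0 <= b2.
Hypothesis H1 : forall zs, (ell <= length zs)%nat -> Forall (good a) zs ->
  forall L, norm L (Dop (pb zs)) <= b1.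
Hypothesis H2 : forall zs, (ell <= length zs)%nat -> Forall (good a) zs ->
  forall L, norm L (Dop (Dop (pb zs))) <= b2.

Lemma bucket_core c : forall ps' x y P Rl,
  Forall (good a) P -> Forall (good a) Rl -> Forall (pairok a c h) ((x, y) :: ps') ->
  suffix_ok h ((x, y) :: ps') ->
  (ell + 1 <= length P + length ps' + length Rl)%nat ->
  exists Err : nat -> R,
    (forall m, pb (P ++ x :: map fst ps' ++ Rl) m - pb (P ++ y :: map snd ps' ++ Rl) m =
       sumd ((x, y) :: ps') * Dop (pb (P ++ map fst ps' ++ Rl)) m + Err m) /\
    (forall L, norm L Err <= INR (length ps') * (h * h * b2)).
Proof.
  induction ps' as [|[x1 y1] ps'' IH]; intros x y P Rl HP HR Hps Hsuf Hlen.
  - exists (fun _ => 0). split.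
    + intros m. simpl map. rewrite !pb_front, !pb_cons. rewrite Bop_diff.
      unfold sumd; simpl. ring.
    + intros L. unfold norm. simpl INR. rewrite Rmult_0_l.
      rewrite (sum_eq _ (fun _ => 0)) by (intros; apply Rabs_R0).
      induction L; simpl; lra.
  - inversion Hps as [|? ? Hxy Hps1]; subst.
    destruct Hsuf as [_ Hsuf1].
    destruct (IH x1 y1 (P ++ [y]) Rl) as [Err1 [HE1 HN1]]; auto.
    { apply Forall_app; split; auto. constructor; [apply Hxy|constructor]. }
    { rewrite length_app; simpl length; simpl length in Hlen. lia. }
    assert (Hsd : sumd ((x, y) :: (x1, y1) :: ps'') = (x - y) + sumd ((x1, y1) :: ps'')).
    { unfold sumd; simpl. ring. }
    set (S1 := sumd ((x1, y1) :: ps'')) in *.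
    set (G := pb (P ++ map fst ps'' ++ Rl)).
    exists (fun m => Err1 m + (S1 * (y - x1)) * Dop (Dop G) m). split.
    + intros m. simpl map. rewrite <- !app_comm_cons.
      specialize (HE1 m). rewrite <- !app_assoc in HE1. simpl app in HE1.
      assert (E1 : pb (P ++ x :: x1 :: map fst ps'' ++ Rl) m - pb (P ++ y :: x1 :: map fst ps'' ++ Rl) m
                   = (x - y) * Dop (pb (P ++ x1 :: map fst ps'' ++ Rl)) m).
      { rewrite (pb_front x P), (pb_front y P), (pb_cons x), (pb_cons y). apply Bop_diff. }
      assert (E2 : Dop (pb (P ++ y :: map fst ps'' ++ Rl)) m - Dop (pb (P ++ x1 :: map fst ps'' ++ Rl)) m
                   = (y - x1) * Dop (Dop G) m).
      { unfold G. rewrite (pb_front y P), (pb_front x1 P), (pb_cons y), (pb_cons x1), !Dop_Bop. apply Bop_diff. }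
      rewrite Hsd.
      replace (pb (P ++ x :: x1 :: map fst ps'' ++ Rl) m - pb (P ++ y :: y1 :: map snd ps'' ++ Rl) m)
        with ((pb (P ++ x :: x1 :: map fst ps'' ++ Rl) m - pb (P ++ y :: x1 :: map fst ps'' ++ Rl) m)
              + (pb (P ++ y :: x1 :: map fst ps'' ++ Rl) m - pb (P ++ y :: y1 :: map snd ps'' ++ Rl) m)) by ring.
      rewrite E1, HE1.
      replace (S1 * (y - x1) * Dop (Dop G) m) with
        (S1 * (Dop (pb (P ++ y :: map fst ps'' ++ Rl)) m - Dop (pb (P ++ x1 :: map fst ps'' ++ Rl)) m))
        by (rewrite E2; ring).
      ring.
    + intros L. eapply Rle_trans; [apply norm_triangle|].
      rewrite (norm_scal L (S1 * (y - x1))).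
      assert (HG : norm L (Dop (Dop G)) <= b2).
      { apply H2.
        - unfold G. rewrite !length_app, length_map. simpl length in Hlen. lia.
        - apply Forall_app; split; auto. apply Forall_app; split; auto.
          apply Forall_map. inversion Hps1; subst. eapply Forall_impl; [|eassumption]. intros [u v] Hu. apply Hu. }
      assert (HS1 : Rabs S1 <= h) by (destruct Hsuf1; auto).
      assert (Hyx : Rabs (y - x1) <= h).
      { unfold pairok in *; simpl in *. apply Rabs_le. inversion Hps1; subst. simpl in *. lra. }
      rewrite Rabs_mult. specialize (HN1 L).
      simpl length. rewrite S_INR.
      pose proof (Rabs_pos S1). pose proof (Rabs_pos (y - x1)).
      assert (Rabs S1 * Rabs (y - x1) * norm L (Dop (Dop G)) <= h * h * b2).
      { apply Rle_trans with (h * h * norm L (Dop (Dop G))).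
        - apply Rmult_le_compat_r; [apply norm_nonneg|]. apply Rmult_le_compat; auto.
        - apply Rmult_le_compat_l; auto. nra. }
      lra.
Qed.

Lemma bucket_bound c ps Rl L :
  Forall (good a) Rl -> Forall (pairok a c h) ps -> suffix_ok h ps ->
  (ell + 2 <= length ps + length Rl)%nat -> 0 <= h -> 0 <= b1 ->
  norm L (fun m => pb (map fst ps ++ Rl) m - pb (map snd ps ++ Rl) m)
    <= h * b1 + INR (length ps) * (h * h * b2).
Proof.
  intros HR Hps Hsuf Hlen Hh Hb1.
  destruct ps as [|[x y] ps'].
  - simpl. unfold norm. rewrite (sum_eq _ (fun _ => 0)) by (intros; rewrite Rminus_diag; apply Rabs_R0).
    assert (sum_f_R0 (fun _ : nat => 0) L = 0) by (induction L; simpl; lra).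
    rewrite H. simpl length. simpl INR. pose proof (Rmult_le_pos h b1 Hh Hb1). lra.
  - destruct (bucket_core c ps' x y [] Rl) as [Err [HE HN]]; auto.
    { simpl length in Hlen. simpl. lia. }
    simpl app in HE. cbn [map app fst snd].
    rewrite (norm_ext L _ _ HE).
    eapply Rle_trans; [apply norm_triangle|].
    rewrite norm_scal.
    assert (HD : norm L (Dop (pb (map fst ps' ++ Rl))) <= b1).
    { apply H1.
      - rewrite length_app, length_map. simpl length in Hlen. lia.
      - apply Forall_app; split; auto. apply Forall_map. inversion Hps; subst.
        eapply Forall_impl; [|eassumption]. intros [u v] Hu. apply Hu. }
    assert (Hs : Rabs (sumd ((x, y) :: ps')) <= h) by (destruct Hsuf; auto).
    specialize (HN L). simpl length. rewrite S_INR.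
    pose proof (norm_nonneg L (Dop (pb (map fst ps' ++ Rl)))).
    pose proof (Rabs_pos (sumd ((x, y) :: ps'))).
    assert (Rabs (sumd ((x, y) :: ps')) * norm L (Dop (pb (map fst ps' ++ Rl))) <= h * b1)
      by (apply Rmult_le_compat; auto).
    nra.
Qed.

Definition Xs (bs : list (list (R * R))) := concat (map (map fst) bs).
Definition Ys (bs : list (list (R * R))) := concat (map (map snd) bs).

Definition bucket_good (b : list (R * R)) : Prop :=
  (exists c, Forall (pairok a c h) b) /\ suffix_ok h b.

Lemma length_Xs bs : length (Xs bs) = fold_right plus O (map (@length _) bs).
Proof. induction bs; simpl; auto. unfold Xs in *; simpl. rewrite length_app, length_map, IHbs. auto. Qed.

Lemma length_Ys bs : length (Ys bs) = length (Xs bs).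
Proof. induction bs; simpl; auto. unfold Xs, Ys in *; simpl. rewrite !length_app, !length_map, IHbs. auto. Qed.

Lemma global_bound : forall bs Q L,
  Forall bucket_good bs -> Forall (good a) Q ->
  (ell + 2 <= length (Xs bs) + length Q)%nat -> 0 <= h -> 0 <= b1 ->
  norm L (fun m => pb (Xs bs ++ Q) m - pb (Ys bs ++ Q) m)
    <= INR (length bs) * (h * b1) + INR (length (Xs bs)) * (h * h * b2).
Proof.
  induction bs as [|b bs IH]; intros Q L Hbs HQ Hlen Hh Hb1.
  - simpl. unfold norm. rewrite (sum_eq _ (fun _ => 0)) by (intros; rewrite Rminus_diag; apply Rabs_R0).
    assert (sum_f_R0 (fun _ : nat => 0) L = 0) by (induction L; simpl; lra).
    rewrite H. unfold Xs; simpl. lra.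
  - inversion Hbs as [|? ? [[c Hc] Hsuf] Hbs1]; subst.
    assert (HgX : forall c' b', Forall (pairok a c' h) b' -> Forall (good a) (map fst b')).
    { intros c' b' Hb'. apply Forall_map. eapply Forall_impl; [|exact Hb']. intros [u v] Hu; apply Hu. }
    assert (HgY : Forall (good a) (map snd b)).
    { apply Forall_map. eapply Forall_impl; [|exact Hc]. intros [u v] Hu; apply Hu. }
    assert (HgXs : forall bs', Forall bucket_good bs' -> Forall (good a) (Xs bs')).
    { induction bs' as [|b' bs' IH']; intros H'; [constructor|].
      inversion H' as [|? ? [[c' Hc'] _] H'']; subst. unfold Xs; simpl.
      apply Forall_app; split; [apply (HgX c' b' Hc')|apply IH'; auto]. }
    unfold Xs, Ys; simpl concat. fold (Xs bs) (Ys bs).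
    assert (HP : pb (map snd b ++ Xs bs ++ Q) = pb (Xs bs ++ (map snd b ++ Q))).
    { apply pb_perm. apply Permutation_app_swap_app. }
    assert (HP2 : pb (map snd b ++ Ys bs ++ Q) = pb (Ys bs ++ (map snd b ++ Q))).
    { apply pb_perm. apply Permutation_app_swap_app. }
    rewrite (norm_ext L _ (fun m => (pb (map fst b ++ (Xs bs ++ Q)) m - pb (map snd b ++ (Xs bs ++ Q)) m)
                               + (pb (Xs bs ++ (map snd b ++ Q)) m - pb (Ys bs ++ (map snd b ++ Q)) m))).
    2: { intros m. rewrite <- !app_assoc. rewrite HP2, <- HP. ring. }
    eapply Rle_trans; [apply norm_triangle|].
    assert (Hl : length (Xs (b :: bs)) = (length b + length (Xs bs))%nat).
    { unfold Xs; simpl. rewrite length_app, length_map; auto. }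
    rewrite Hl in *. 
    pose proof (bucket_bound c b (Xs bs ++ Q) L) as B1.
    pose proof (IH (map snd b ++ Q) L) as B2.
    simpl length. rewrite length_app, length_map, S_INR, plus_INR.
    assert (HB1 : norm L (fun m => pb (map fst b ++ Xs bs ++ Q) m - pb (map snd b ++ Xs bs ++ Q) m)
                  <= h * b1 + INR (length b) * (h * h * b2)).
    { apply B1; auto. apply Forall_app; split; auto. rewrite length_app. lia. }
    assert (HB2 : norm L (fun m => pb (Xs bs ++ map snd b ++ Q) m - pb (Ys bs ++ map snd b ++ Q) m)
                  <= INR (length bs) * (h * b1) + INR (length (Xs bs)) * (h * h * b2)).
    { apply B2; auto. apply Forall_app; split; auto. rewrite length_app, length_map. lia. }
    lra.
Qed.

End Bucket.

Lemma Int_part_spec r : IZR (Int_part r) <= r < IZR (Int_part r) + 1.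
Proof. destruct (base_Int_part r); lra. Qed.

Lemma Int_part_bounds_Z z r : IZR z <= r -> r < IZR z + 1 -> Int_part r = z.
Proof.
  intros H1 H2. destruct (Int_part_spec r) as [H3 H4].
  assert (A : (Int_part r - z < 1)%Z) by (apply lt_IZR; rewrite minus_IZR; lra).
  assert (B : (z - Int_part r < 1)%Z) by (apply lt_IZR; rewrite minus_IZR; lra).
  lia.
Qed.

Lemma Int_part_0 : Int_part 0 = 0%Z.
Proof. apply Int_part_bounds_Z; simpl; lra. Qed.

Lemma Int_part_step t d : 0 <= d <= 1 ->
  (Int_part (t + d) = Int_part t \/ Int_part (t + d) = (Int_part t + 1)%Z).
Proof.
  intros Hd. destruct (Int_part_spec t) as [A1 A2]. destruct (Int_part_spec (t + d)) as [B1 B2].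
  assert (C1 : (Int_part t - 1 < Int_part (t + d))%Z) by (apply lt_IZR; rewrite minus_IZR; simpl; lra).
  assert (C2 : (Int_part (t + d) < Int_part t + 2)%Z) by (apply lt_IZR; rewrite plus_IZR; simpl; lra).
  lia.
Qed.

Section Bres.
Variables (k : R) (c : R).
Hypothesis Hk : 0 < k.

Definition Uf (l : list R) : R := sumR (map (fun x => x - c) l).
Definition Ff (l : list R) : Z := Int_part (k * Uf l).

Fixpoint brs (l : list R) : list R :=
  match l with
  | [] => []
  | x :: l' => (c + IZR (Ff (x :: l') - Ff l') / k) :: brs l'
  end.

Fixpoint cnt (l : list R) : nat :=
  match l with
  | [] => O
  | x :: l' => (Z.to_nat (Ff (x :: l') - Ff l') + cnt l')%nat
  end.

Definition inb (x : R) : Prop := c <= x <= c + / k.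

Lemma Ff_nil : Ff [] = 0%Z.
Proof. unfold Ff, Uf; simpl. rewrite Rmult_0_r. apply Int_part_0. Qed.

Lemma Ff_step x l : inb x -> (Ff (x :: l) - Ff l = 0 \/ Ff (x :: l) - Ff l = 1)%Z.
Proof.
  intros Hx. unfold Ff, Uf. simpl map. unfold sumR; simpl fold_right. fold (sumR (map (fun x => x - c) l)).
  replace (k * (x - c + sumR (map (fun x0 : R => x0 - c) l))) with
    (k * sumR (map (fun x0 : R => x0 - c) l) + k * (x - c)) by ring.
  destruct (Int_part_step (k * sumR (map (fun x0 : R => x0 - c) l)) (k * (x - c))).
  - unfold inb in Hx. split; [nra|].
    assert (k * (x - c) <= k * / k) by (apply Rmult_le_compat_l; lra).
    rewrite Rinv_r in H by lra. lra.
  - left; lia.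
  - right; lia.
Qed.

Lemma brs_length l : length (brs l) = length l.
Proof. induction l; simpl; auto. Qed.

Lemma cnt_spec l : Forall inb l -> Z.of_nat (cnt l) = Ff l /\ (cnt l <= length l)%nat.
Proof.
  induction 1 as [|x l Hx Hl IH].
  - simpl. rewrite Ff_nil. auto.
  - simpl. destruct IH as [IH1 IH2]. destruct (Ff_step x l Hx) as [E|E]; rewrite E; simpl; lia.
Qed.

Lemma brs_sum l : Forall inb l -> sumR (brs l) = INR (length l) * c + IZR (Ff l) / k.
Proof.
  induction 1 as [|x l Hx Hl IH].
  - simpl. rewrite Ff_nil. unfold sumR; simpl. field. lra.
  - simpl brs. unfold sumR; simpl fold_right. fold (sumR (brs l)). rewrite IH.
    cbn [length]. rewrite S_INR. replace (IZR (Ff (x :: l))) with (IZR (Ff (x :: l) - Ff l) + IZR (Ff l))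
      by (rewrite minus_IZR; ring). field. lra.
Qed.

Lemma Uf_eq l : Uf l = sumR l - INR (length l) * c.
Proof.
  induction l as [|x l IH]; unfold Uf, sumR in *; cbn [map fold_right length]; [simpl; ring|].
  rewrite IH, S_INR; ring.
Qed.

Lemma sumd_combine l1 l2 : length l1 = length l2 ->
  sumd (combine l1 l2) = sumR l1 - sumR l2.
Proof.
  revert l2; induction l1; intros [|y l2] H; simpl in *; try discriminate.
  - unfold sumd, sumR; simpl. ring.
  - unfold sumd in *. unfold sumR in *; simpl. rewrite IHl1 by lia. ring.
Qed.

Lemma brs_suffix l : Forall inb l -> suffix_ok (/ k) (combine l (brs l)).
Proof.
  induction 1 as [|x l Hx Hl IH]; simpl; auto. split; auto.
  change ((x, c + IZR (Ff (x :: l) - Ff l) / k) :: combine l (brs l)) with (combine (x :: l) (brs (x :: l))).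
  rewrite sumd_combine by (simpl; rewrite brs_length; auto).
  rewrite brs_sum by (constructor; auto).
  destruct (Int_part_spec (k * Uf (x :: l))) as [A B].
  fold (Ff (x :: l)) in A, B. rewrite Uf_eq in A, B.
  set (z := IZR (Ff (x :: l))) in *.
  set (sx := sumR (x :: l)) in *.
  apply Rabs_le. split.
  - assert (z / k <= sx - INR (length (x :: l)) * c).
    { apply (Rmult_le_reg_l k); [lra|]. field_simplify; lra. }
    assert (0 <= / k) by (apply Rlt_le, Rinv_0_lt_compat; lra). lra.
  - assert (sx - INR (length (x :: l)) * c < z / k + / k).
    { apply (Rmult_lt_reg_l k); [lra|]. field_simplify; lra. }
    lra.
Qed.

Lemma brs_in l : Forall inb l -> Forall inb (brs l).
Proof.
  induction 1 as [|x l Hx Hl IH]; simpl; constructor; auto.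
  unfold inb. assert (0 < / k) by (apply Rinv_0_lt_compat; lra).
  destruct (Ff_step x l Hx) as [E|E]; rewrite E; simpl; unfold Rdiv; rewrite ?Rmult_0_l, ?Rmult_1_l; lra.
Qed.

Lemma brs_perm l : Forall inb l ->
  Permutation (brs l) (repeat (c + / k) (cnt l) ++ repeat c (length l - cnt l)).
Proof.
  intros Hl. induction Hl as [|x l Hx Hl IH]; [simpl; auto|]. cbn [brs cnt length].
  destruct (cnt_spec l Hl) as [_ Hc].
  destruct (Ff_step x l Hx) as [E|E]; rewrite E.
  - change (Z.to_nat 0) with O. rewrite Nat.add_0_l. replace (c + IZR 0 / k) with c by (simpl; field; lra).
    replace (S (length l) - cnt l)%nat with (S (length l - cnt l)) by lia.
    simpl repeat. eapply perm_trans; [apply perm_skip; exact IH|].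
    apply Permutation_middle.
  - change (Z.to_nat 1) with 1%nat. replace (c + IZR 1 / k) with (c + / k) by (simpl; field; lra).
    replace (S (length l) - (1 + cnt l))%nat with (length l - cnt l)%nat by lia.
    simpl. apply perm_skip. exact IH.
Qed.

End Bres.

Lemma map_fst_combine {A B} (l1 : list A) (l2 : list B) : length l1 = length l2 ->
  map fst (combine l1 l2) = l1.
Proof. revert l2; induction l1; intros [|y l2] H; simpl in *; try discriminate; auto. f_equal; auto. Qed.

Lemma map_snd_combine {A B} (l1 : list A) (l2 : list B) : length l1 = length l2 ->
  map snd (combine l1 l2) = l2.
Proof. revert l2; induction l1; intros [|y l2] H; simpl in *; try discriminate; auto. f_equal; auto. Qed.

Lemma Forall_combine {A B} (P : A -> Prop) (Q : B -> Prop) l1 l2 :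
  Forall P l1 -> Forall Q l2 -> Forall (fun xy => P (fst xy) /\ Q (snd xy)) (combine l1 l2).
Proof.
  intros H1; revert l2; induction H1; intros l2 H2; simpl; auto.
  destruct H2; simpl; auto.
Qed.

Section Assemble.
Variables (kR : R) (p q : nat -> R) (ord : nat -> list nat).

Definition cj (j : nat) : R := INR j / kR.
Definition xsj (j : nat) : list R := map p (ord j).
Definition bj (j : nat) : list (R * R) := combine (xsj j) (brs kR (cj j) (xsj j)).

Lemma Xs_eq r : Xs (map bj r) = map p (flat_map ord r).
Proof.
  induction r as [|j r IH]; simpl; auto.
  unfold Xs in *. simpl. rewrite IH, map_app. f_equal.
  unfold bj. rewrite map_fst_combine; auto. rewrite brs_length; auto.
Qed.

Lemma Ys_perm r : (forall j, In j r -> Permutation (brs kR (cj j) (xsj j)) (map q (ord j))) ->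
  Permutation (Ys (map bj r)) (map q (flat_map ord r)).
Proof.
  induction r as [|j r IH]; intros H; simpl; auto.
  unfold Ys in *. simpl. rewrite map_app. apply Permutation_app.
  - unfold bj. rewrite map_snd_combine by (rewrite brs_length; auto). apply H; simpl; auto.
  - apply IH. intros; apply H; simpl; auto.
Qed.

End Assemble.

Lemma INR_div2 k : 2 * INR (Nat.div k 2) <= INR k /\ INR k <= 2 * INR (Nat.div k 2) + 1.
Proof.
  pose proof (Nat.div_mod_eq k 2). pose proof (Nat.mod_upper_bound k 2 ltac:(lia)).
  set (d := Nat.div k 2) in *. set (r := k mod 2) in *.
  split.
  - replace (2 * INR d) with (INR (2 * d)) by (rewrite mult_INR; simpl; ring). apply le_INR; lia.
  - replace (2 * INR d + 1) with (INR (2 * d + 1)) by (rewrite plus_INR, mult_INR; simpl; ring).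
    apply le_INR; lia.
Qed.

Lemma lowIdx_bound k alpha : 1 <= Rpower (INR k) alpha ->
  Rpower (INR k) alpha / 2 <= INR (lowIdx k alpha).
Proof.
  intros H. unfold lowIdx. set (x := Rpower (INR k) alpha) in *.
  destruct (Int_part_spec x) as [A B].
  assert (Hz : (0 <= Int_part x)%Z).
  { apply le_IZR. simpl. assert (IZR (Int_part x) > -1) by lra.
    assert (-1 < Int_part x)%Z by (apply lt_IZR; simpl; lra). apply IZR_le. lia. }
  rewrite INR_IZR_INZ, Z2Nat.id by auto.
  assert (H1 : (1 <= Int_part x)%Z).
  { assert (0 < Int_part x)%Z by (apply lt_IZR; simpl; lra). lia. }
  apply IZR_le in H1. simpl in H1.
  destruct (Rle_lt_dec 2 x); lra.
Qed.

Theorem mainTheorem13 (alpha beta : R) :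
  0 < alpha < 1 -> 0 < beta < 1 -> alpha + beta > 1 ->
  exists C : R, exists K : nat, forall k : nat, (K <= k)%nat ->
  forall (n : nat) (p q : nat -> R) (ord : nat -> list nat),
    (forall i, (i < n)%nat -> 0 <= p i <= 1) ->
    (* ord j lists I*_j = {i : p_i in I_j} in some fixed order *)
    (forall j, In j (bucket_range k alpha) ->
       NoDup (ord j) /\ (forall i, In i (ord j) <-> ((i < n)%nat /\ inI k j (p i)))) ->
    (* medium-expectation rounding *)
    (forall j, In j (bucket_range k alpha) ->
       forall t, (t < length (ord j))%nat ->
         ((Z.of_nat t < m_bucket k j p (ord j))%Z ->
            q (nth t (ord j) O) = INR (S j) / INR k) /\
         ((m_bucket k j p (ord j) <= Z.of_nat t)%Z ->
            q (nth t (ord j) O) = INR j / INR k)) ->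
    (* M_1^*(k) is enumerated by the concatenation of the buckets *)
    let M := flat_map ord (bucket_range k alpha) in
    INR (length M) > Rpower (INR k) beta ->
    tv_pb (map p M) (map q M)
      <= C * (Rpower (INR k) (- ((alpha + beta - 1) / 2))
              + Rpower (INR k) (- alpha) + Rpower (INR k) (- (1/2))).
Proof.
  intros Hal Hbe Hab. exists 24, 4%nat. intros k Hk n p q ord Hp Hord Hq M HN.
  assert (HkR : 4 <= INR k).
  { apply (le_INR 4) in Hk. simpl in Hk. lra. }
  assert (Hk0 : INR k <> 0) by (intro; lra).
  set (kR := INR k) in *.
  assert (HA1 : 1 <= Rpower kR alpha).
  { rewrite <- (Rpower_O kR) by lra. apply Rle_Rpower; lra. }
  assert (HA2 : Rpower kR alpha <= kR).
  { rewrite <- (Rpower_1 kR) at 2 by lra. apply Rle_Rpower; lra. }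
  set (A := Rpower kR alpha) in *.
  set (a := A / (4 * kR)).
  assert (Ha0 : 0 < a) by (unfold a; apply Rdiv_lt_0_compat; lra).
  assert (Ha4 : a <= / 4).
  { unfold a. apply (Rmult_le_reg_l (4 * kR)); [lra|]. field_simplify; lra. }
  assert (Ha2 : a < / 2) by lra.
  set (range := bucket_range k alpha) in *.
  assert (Hlow := lowIdx_bound k alpha HA1). fold kR A in Hlow.
  assert (Hrange : forall j, In j range -> (lowIdx k alpha <= j /\ j <= Nat.div k 2)%nat).
  { intros j Hj. unfold range, bucket_range in Hj. apply in_seq in Hj. lia. }
  assert (Hdiv := INR_div2 k). fold kR in Hdiv.
  assert (Hgoodc : forall j, In j range -> a <= cj kR j /\ cj kR j + / kR <= 1 - a).
  { intros j Hj. destruct (Hrange j Hj) as [Hj1 Hj2]. apply le_INR in Hj1, Hj2.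
    unfold cj. split.
    - unfold a. apply (Rmult_le_reg_l (4 * kR)); [lra|]. field_simplify; lra.
    - assert (INR j / kR <= / 2).
      { apply (Rmult_le_reg_l kR); [lra|]. field_simplify; lra. }
      assert (/ kR <= / 4) by (apply Rinv_le_contravar; lra). lra. }
  assert (Hinb : forall j, In j range -> Forall (inb kR (cj kR j)) (xsj p ord j)).
  { intros j Hj. unfold xsj. apply Forall_map, Forall_forall. intros i Hi.
    destruct (Hord j Hj) as [_ Hi']. apply Hi' in Hi. destruct Hi as [_ HI].
    unfold inI in HI. unfold inb, cj.
    destruct (Nat.ltb j (Nat.div k 2)) eqn:Elt.
    - rewrite S_INR in HI. replace ((INR j + 1) / INR k) with (INR j / kR + / kR) in HI
        by (unfold kR; field; exact Hk0). fold kR in HI. lra.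
    - destruct HI as [Hjeq HI]. fold kR in HI. split; [lra|].
      assert (/ 2 <= INR j / kR + / kR).
      { apply (Rmult_le_reg_l kR); [lra|]. field_simplify; [|lra]. rewrite Hjeq. lra. }
      lra. }
  assert (Hmb : forall j, m_bucket k j p (ord j) = Ff kR (cj kR j) (xsj p ord j)).
  { intros j. unfold m_bucket, Ff, Uf, S_bucket, xsj, cj. rewrite map_map. reflexivity. }
  assert (Hperm : forall j, In j range ->
            Permutation (brs kR (cj kR j) (xsj p ord j)) (map q (ord j))).
  { intros j Hj. eapply perm_trans; [apply brs_perm; [lra|apply Hinb; auto]|].
    destruct (cnt_spec kR (cj kR j) ltac:(lra) (xsj p ord j) (Hinb j Hj)) as [Hc1 Hc2].
    set (m := cnt kR (cj kR j) (xsj p ord j)) in *.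
    assert (HL : length (xsj p ord j) = length (ord j)) by (unfold xsj; apply length_map).
    rewrite HL in *.
    rewrite <- Hmb in Hc1.
    set (R1 := repeat (cj kR j + / kR) m ++ repeat (cj kR j) (length (ord j) - m)).
    assert (Heq : R1 = map q (ord j)).
    { symmetry. apply (nth_ext _ _ (q O) 0).
      - change (length (map q (ord j)) = length R1). unfold R1.
        rewrite length_map, length_app, !repeat_length. lia.
      - intros t Ht. change (nth t (map q (ord j)) (q O) = nth t R1 0).
        change (t < length (map q (ord j)))%nat in Ht.
        rewrite length_map in Ht. rewrite map_nth. unfold R1.
        destruct (Hq j Hj t Ht) as [Q1 Q2].
        destruct (Nat.lt_ge_cases t m) as [Htm|Htm].
        + rewrite app_nth1 by (rewrite repeat_length; auto). rewrite nth_repeat_lt by auto.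
          rewrite Q1 by lia. unfold cj. rewrite S_INR. unfold kR. field. exact Hk0.
        + rewrite app_nth2 by (rewrite repeat_length; auto). rewrite repeat_length.
          rewrite nth_repeat_lt by lia. rewrite Q2 by lia. unfold cj. reflexivity. }
    rewrite Heq. apply Permutation_refl. }

  set (bs := map (bj kR p ord) range).
  assert (Hbg : Forall (bucket_good a (/ kR)) bs).
  { unfold bs. apply Forall_map, Forall_forall. intros j Hj. split.
    - exists (cj kR j). unfold bj.
      eapply Forall_impl; [|apply (Forall_combine (inb kR (cj kR j)) (inb kR (cj kR j)));
        [apply Hinb; auto| apply brs_in; [lra|apply Hinb; auto]]].
      intros [x y] [Hx Hy]. destruct (Hgoodc j Hj). unfold pairok, good, inb in *. simpl in *.
      repeat split; lra.
    - apply brs_suffix; [lra| apply Hinb; auto]. }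
  assert (HXs : Xs bs = map p M) by (unfold bs, M; apply Xs_eq).
  assert (HYs : Permutation (Ys bs) (map q M)) by (unfold bs, M; apply Ys_perm; auto).
  set (N := length M) in *.
  assert (HB1 : 1 <= Rpower kR beta).
  { rewrite <- (Rpower_O kR) by lra. apply Rle_Rpower; lra. }
  assert (HN2 : (2 <= N)%nat).
  { destruct (le_lt_dec 2 N); auto. assert (N <= 1)%nat by lia. apply le_INR in H. simpl in H. lra. }
  assert (HNR : 2 <= INR N) by (apply (le_INR 2) in HN2; simpl in HN2; lra).
  set (ell := (N - 2)%nat).
  assert (HSell : INR (S ell) = INR N - 1).
  { unfold ell. replace (S (N - 2)) with (N - 1)%nat by lia. rewrite minus_INR by lia. simpl; ring. }
  set (b1 := 2 * sqrt (/ (INR (S ell) * (2 * a)))).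
  set (b2 := 12 * / (INR (S ell) * (2 * a))).
  assert (HXpos : 0 < INR (S ell) * (2 * a)) by (rewrite HSell; nra).
  assert (Hb2 : 0 <= b2) by (unfold b2; apply Rmult_le_pos; [lra|apply Rlt_le, Rinv_0_lt_compat; auto]).
  assert (Hb1 : 0 <= b1) by (unfold b1; apply Rmult_le_pos; [lra|apply sqrt_pos]).
  assert (Hmono : forall zs : list R, (ell <= length zs)%nat ->
            / (INR (S (length zs)) * (2 * a)) <= / (INR (S ell) * (2 * a))).
  { intros zs Hz. apply Rinv_le_contravar; auto. apply Rmult_le_compat_r; [lra|]. apply le_INR; lia. }
  assert (H1 : forall zs, (ell <= length zs)%nat -> Forall (good a) zs ->
            forall L, norm L (Dop (pb zs)) <= b1).
  { intros zs Hz Hg L. apply Rle_trans with (2 * sqrt (/ (INR (S (length zs)) * (2 * a))));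
      [apply D1_bound; auto|]. unfold b1.
    apply Rmult_le_compat_l; [lra|]. apply sqrt_le_1_alt. apply Hmono; auto. }
  assert (H2 : forall zs, (ell <= length zs)%nat -> Forall (good a) zs ->
            forall L, norm L (Dop (Dop (pb zs))) <= b2).
  { intros zs Hz Hg L. apply Rle_trans with (12 * / (INR (S (length zs)) * (2 * a)));
      [apply D2_bound; auto|]. unfold b2.
    apply Rmult_le_compat_l; [lra|]. apply Hmono; auto. }
  assert (Hh : 0 <= / kR) by (apply Rlt_le, Rinv_0_lt_compat; lra).
  assert (HlenX : length (Xs bs) = N) by (rewrite HXs, length_map; auto).
  pose proof (global_bound a (/ kR) b1 b2 ell Hb2 H1 H2 bs [] N Hbg (Forall_nil _)) as G.
  rewrite HlenX in G. simpl length in G. specialize (G ltac:(unfold ell; lia) Hh Hb1).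
  rewrite !app_nil_r in G.
  unfold tv_pb. rewrite !length_map. fold N. rewrite Nat.max_id.
  rewrite <- HXs. rewrite <- (pb_perm _ _ HYs).
  change (sum_f_R0 (fun m => Rabs (pb (Xs bs) m - pb (Ys bs) m)) N) with
    (norm N (fun m => pb (Xs bs) m - pb (Ys bs) m)).
  eapply Rle_trans; [apply Rmult_le_compat_l; [lra|exact G]|].
  set (J := length bs).
  assert (HJ : INR J * / kR <= 1).
  { assert (HJn : (J <= S (Nat.div k 2))%nat).
    { unfold J, bs. rewrite length_map. unfold range, bucket_range. rewrite length_seq. lia. }
    apply le_INR in HJn. rewrite S_INR in HJn.
    apply (Rmult_le_reg_l kR); [lra|]. field_simplify; lra. }
  assert (HJ0 : 0 <= INR J) by apply pos_INR.
  set (g := alpha + beta - 1).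
  assert (Hg : 0 < g) by (unfold g; lra).
  set (E := Rpower kR g).
  assert (HE : 0 < E) by (unfold E, Rpower; apply exp_pos).
  assert (HEdef : Rpower kR beta * A / kR = E).
  { unfold E, g, A. rewrite <- (Rpower_1 kR) at 3 by lra.
    unfold Rdiv. rewrite <- Rpower_Ropp, <- !Rpower_plus. f_equal. ring. }
  assert (HNa : E / 4 < INR N * a).
  { rewrite <- HEdef. unfold a. apply (Rmult_lt_reg_l (4 * kR)); [lra|].
    field_simplify; [|lra|lra].
    assert (0 < A) by lra. nra. }
  assert (HXN : INR N * a <= INR (S ell) * (2 * a)) by (rewrite HSell; nra).
  set (T1 := Rpower kR (- (g / 2))).
  assert (HT1 : T1 = / sqrt E).
  { unfold T1. rewrite Rpower_Ropp. f_equal. unfold E. rewrite <- Rpower_sqrt by auto.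
    rewrite Rpower_mult. f_equal. }
  assert (Hsq : 0 < sqrt E) by (apply sqrt_lt_R0; auto).
  assert (Hb1T : b1 <= 4 * T1).
  { unfold b1. rewrite HT1.
    assert (sqrt (/ (INR (S ell) * (2 * a))) <= sqrt (4 * / E)).
    { apply sqrt_le_1_alt. apply Rle_trans with (/ (E / 4)).
      - apply Rinv_le_contravar; [apply Rdiv_lt_0_compat; lra|lra].
      - right; field; lra. }
    rewrite sqrt_mult_alt in H by lra. rewrite (sqrt_inv E) in H.
    replace (sqrt 4) with 2 in H by (replace 4 with (2 * 2) by ring; rewrite sqrt_square; lra).
    lra. }
  set (T2 := Rpower kR (- alpha)).
  assert (HT2 : T2 = / A) by (unfold T2, A; apply Rpower_Ropp).
  assert (HA0 : 0 < A) by lra.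
  assert (Hb2T : INR N * (/ kR * / kR * b2) <= 48 * T2).
  { assert (b2 <= 12 * / (INR N * a)).
    { unfold b2. apply Rmult_le_compat_l; [lra|]. apply Rinv_le_contravar; auto. nra. }
    apply Rle_trans with (INR N * (/ kR * / kR * (12 * / (INR N * a)))).
    { apply Rmult_le_compat_l; [lra|]. apply Rmult_le_compat_l; [|auto].
      apply Rmult_le_pos; auto. }
    replace (INR N * (/ kR * / kR * (12 * / (INR N * a)))) with (48 * / A * / kR)
      by (unfold a; field; repeat split; lra).
    rewrite HT2.
    assert (/ kR <= 1) by (rewrite <- Rinv_1; apply Rinv_le_contravar; lra).
    assert (0 < / A) by (apply Rinv_0_lt_compat; lra). nra. }
  assert (HT1p : 0 < T1) by (unfold T1, Rpower; apply exp_pos).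
  assert (HT3p : 0 < Rpower kR (- (1 / 2))) by (unfold Rpower; apply exp_pos).
  fold T2. replace (- ((alpha + beta - 1) / 2)) with (- (g / 2)) by (unfold g; ring). fold T1.
  assert (INR J * (/ kR * b1) <= 4 * T1).
  { replace (INR J * (/ kR * b1)) with ((INR J * / kR) * b1) by ring.
    apply Rle_trans with (1 * b1); [apply Rmult_le_compat_r; auto|lra]. }
  lra.
Qed.
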